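(* In the setting below, one of the following holds: (1) $\max_{g\in G_-}|\delta(g)| = E_k-\lfloor E_k\rfloor_2$; or (2) $\max_{g\in G_-}|\delta(g)|\ge E_k-\lfloor E_k\rfloor_2+2$.
   Context: Let $\Lambda_{24}\subset\mathbb{R}^{24}$ be the Leech lattice scaled so its minimal nonzero vectors have length $2$, and $\mathcal C$ the set of its $196560$ minimal vectors. Let $\mathrm{Co}_0$ be the finite group of linear isometries of $\mathbb{R}^{24}$ mapping $\Lambda_{24}$ onto itself; it acts (transitively) on $\mathcal C$. A set $X\subseteq\mathcal C$ is antipodal if $X=-X$. Fix an antipodal $S\subseteq\mathcal C$ with $\langle x,y\rangle\le1$ for distinct $x,y\in S$. Let $k\ge1$, $S_1=S$, $g_1=\mathrm{id}$, and for $2\le j\le k$ let $S_j=g_jS\setminus(S_1\cup\dots\cup S_{j-1})$ for some $g_j\in\mathrm{Co}_0$, where moreover $|S_j|\ge|S|\bigl(1-\sum_{i<j}|S_i|/|\mathcal C|\bigr)$. Put $U_k=S_1\cup\dots\cup S_k$ and $E_k=\mathbb{E}_{g}\,|gS\cap U_k|$ for $g$ uniformly random in $\mathrm{Co}_0$. For real $x$, $\lfloor x\rfloor_2$ is the greatest even integer $\le x$ and $\lceil x\rceil_2$ the least even integer $\ge x$. For $g\in\mathrm{Co}_0$ let $\delta(g)=|gS\cap U_k|-E_k$, and $G_+=\{g:\delta(g)>0\}$, $G_-=\{g:\delta(g)<0\}$. *)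

(* Defs.v *)
From HB Require Import structures.
From mathcomp Require Import all_boot all_order all_algebra.
From mathcomp Require Import finmap.
From mathcomp Require Import boolp classical_sets fsbigop reals.
Set Implicit Arguments. Unset Strict Implicit. Unset Printing Implicit Defensive.
Import Order.TTheory GRing.Theory Num.Theory.
Local Open Scope ring_scope.
Local Open Scope fset_scope.

(* ---------- The extended binary Golay code (length 24) ----------
   Coordinates 0..22 = Z/23, coordinate 23 = infinity.  The code is the
   extended quadratic-residue code: spanned by the all-ones word and the 23
   cyclic shifts of the indicator of {0} ∪ QR(23), QR(23) = squares mod 23. *)
Definition qr23 : seq nat := [:: 0; 1; 2; 3; 4; 6; 8; 9; 12; 13; 16; 18]%N.

Definition golay_gen (i : 'I_24) : {ffun 'I_24 -> bool} :=
  if (i < 23)%N then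
    [ffun p : 'I_24 => (p < 23)%N && has (fun b => (b + i) %% 23 == p)%N qr23]
  else [ffun => true].

Definition golay_word (c : {ffun 'I_24 -> bool}) : {ffun 'I_24 -> bool} :=
  [ffun p => \big[addb/false]_(i : 'I_24 | c i) golay_gen i p].

Definition in_golay (w : {ffun 'I_24 -> bool}) : bool :=
  [exists c, golay_word c == w].

(* ---------- The Leech lattice, integral model (Conway–Sloane) ----------
   x ∈ Z^24 is in L iff for some m ∈ {0,1}: all x_i ≡ m (mod 2),
   Σ x_i ≡ 4m (mod 8), and for each a, {i | x_i ≡ a (mod 4)} is a Golay
   codeword.  The Leech lattice is Λ = L / √8 (minimal norm 4, length 2). *)
Definition leechZ (x : 'I_24 -> int) : bool :=
  [exists m : 'I_2,
    [&& [forall i, ((x i - (m : nat)%:Z) %% 2)%Z == 0],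
        (((\sum_i x i) - 4 * (m : nat)%:Z) %% 8)%Z == 0
      & [forall a : 'I_4,
           in_golay [ffun i => ((x i) %% 4)%Z == (a : nat)%:Z]]]].

Section Leech.
Variable R : realType.

Definition vdot (u v : 'rV[R]_24) : R := \sum_i u 0 i * v 0 i.

Definition Leech : set 'rV[R]_24 :=
  [set v | exists x : 'I_24 -> int,
      leechZ x /\ v = \row_i ((x i)%:~R / Num.sqrt 8)].

Definition Cmin : set 'rV[R]_24 := [set v | Leech v /\ vdot v v = 4].

Definition Co0 : set 'M[R]_24 :=
  [set M | (forall u v, vdot (u *m M) (v *m M) = vdot u v) /\
           image Leech (fun v : 'rV[R]_24 => v *m M) = Leech].

Definition act (M : 'M[R]_24) (X : {fset 'rV[R]_24}) : {fset 'rV[R]_24} :=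
  [fset (v : 'rV[R]_24) *m M | v in X].

Definition antipodal (X : {fset 'rV[R]_24}) : Prop := [fset - v | v in X] = X.

Definition Spart_of (S : {fset 'rV[R]_24}) (g : nat -> 'M[R]_24)
  (Uprev : {fset 'rV[R]_24}) (j : nat) : {fset 'rV[R]_24} :=
  if j == 1%N then S else act (g j) S `\` Uprev.

Fixpoint Ucov (S : {fset 'rV[R]_24}) (g : nat -> 'M[R]_24) (j : nat)
  : {fset 'rV[R]_24} :=
  match j with
  | 0 => fset0
  | j'.+1 => Ucov S g j' `|` Spart_of S g (Ucov S g j') j'.+1
  end.

Definition Spart S g (j : nat) := Spart_of S g (Ucov S g j.-1) j.

Definition Ek S g (k : nat) : R :=
  (\sum_(h \in Co0) ((#|` act h S `&` Ucov S g k|)%:R : R)) /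
  (\sum_(h \in Co0) (1 : R) : R).

Definition delta S g k (h : 'M[R]_24) : R :=
  (#|` act h S `&` Ucov S g k|)%:R - Ek S g k.

Definition floor2 (x : R) : R := (2 * Num.floor (x / 2))%:~R.

End Leech.

(* Main.v *)
Require Import Defs.
From HB Require Import structures.
From mathcomp Require Import all_boot all_order all_algebra.
From mathcomp Require Import finmap.
From mathcomp Require Import boolp classical_sets fsbigop reals.
From mathcomp Require Import zify ring lra.
Import Order.TTheory GRing.Theory Num.Theory.
Local Open Scope ring_scope.
Local Open Scope fset_scope.

Section H.
Variable R : realType.
Local Notation V := 'rV[R]_24.

Definition symc (X : {fset V}) := forall v, v \in X -> - v \in X.

Lemma neg_neq (v : V) : v != 0 -> v != - v.
Proof.
move=> nz; apply/eqP => e.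
have : (2%:R : R) *: v == 0.
  by rewrite scaler_nat mulr2n {1}e addNr.
by rewrite scaler_eq0 pnatr_eq0 /= (negbTE nz).
Qed.

Lemma even_sym (n : nat) (X : {fset V}) : #|` X| = n -> symc X -> (0 : V) \notin X ->
  ~~ odd n.
Proof.
elim: n {-2}n (leqnn n) X => [|N IH] n Hn X HX Hs H0.
  by move: Hn; rewrite leqn0 => /eqP ->.
case: (fset_0Vmem X) => [E|[v vX]].
  by move: HX; rewrite E cardfs0 => <-.
have vnz : v != 0 by apply: contraNneq H0 => <-.
have sub : ([fset v; - v] `<=` X)%fset.
  by apply/fsubsetP => x; rewrite !inE => /orP[] /eqP ->; [|apply: Hs].
have c2 : #|` [fset v; - v]%fset| = 2%N by rewrite cardfs2 neg_neq.
have Hc := cardfsDS sub; rewrite c2 HX in Hc.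
have n2 : (2 <= n)%N by have := fsubset_leq_card sub; rewrite c2 HX.
have e : odd n = odd (n - 2).
  by clear -n2; case: n n2 => [|[|m]] //= _; rewrite negbK ?subn0 ?subSS ?subn0.
rewrite e; apply: (IH _ _ _ Hc).
- by rewrite leq_subLR; apply: (leq_trans Hn); rewrite addnC addn2.
- move=> x; rewrite !inE => /andP[nx xX]; rewrite Hs // andbT.
  apply: contra nx => /orP[] /eqP ee; apply/orP.
    by right; rewrite -ee opprK.
  by left; rewrite -(opprK x) ee opprK.
- by rewrite !inE negb_and H0 orbT.
Qed.

Lemma act_sym (M : 'M[R]_24) (S : {fset V}) : symc S -> symc (act M S).
Proof.
move=> hS v /imfsetP [u uS ->] /=.
by rewrite -mulNmx; apply: in_imfset; apply: hS.
Qed.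

Lemma Ucov_sym (S : {fset V}) g j : symc S -> symc (Ucov S g j).
Proof.
move=> hS; elim: j => [|j IH] /=; first by move=> v; rewrite inE.
move=> v; rewrite /Spart_of; case: ifP => _.
  by rewrite !inE => /orP[/IH|/hS] ->; rewrite ?orbT.
rewrite !inE => /orP[/IH -> //|/andP[_ va]].
have -> := @act_sym (g j.+1) S hS v va.
by case: (- v \in Ucov S g j).
Qed.

Lemma vdot00 : vdot (0 : V) 0 = 0.
Proof. by rewrite /vdot big1 // => i _; rewrite mxE mul0r. Qed.

Lemma even_card (S : {fset V}) g k h : (forall x, x \in S -> Cmin x) -> antipodal S -> Co0 h ->
  ~~ odd #|` act h S `&` Ucov S g k|.
Proof.
move=> hC hA [hiso _].
have hS : symc S.
  by move=> v vS; rewrite -hA; apply: in_imfset.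
apply: (@even_sym _ _ erefl).
  move=> v; rewrite !inE => /andP[a b].
  by rewrite (@act_sym h S hS v a) (@Ucov_sym S g k hS v b).
rewrite !inE negb_and; apply/orP; left; apply/negP => /imfsetP [u uS] /= e.
have [_ uu] := hC u uS.
have := hiso u u; rewrite -e vdot00 uu => /eqP.
by rewrite eq_sym pnatr_eq0.
Qed.

Local Open Scope ring_scope.
Lemma arith (N : nat) (E : R) : ~~ odd N -> N%:R - E < 0 ->
  `|N%:R - E| = E - floor2 E \/ `|N%:R - E| >= E - floor2 E + 2.
Proof.
move=> ev lt.
have hN : N = (N./2).*2 by rewrite -{1}(odd_double_half N) (negbTE ev).
rewrite ltr0_norm // opprB /floor2.
set f := Num.floor (E / 2).
set m : int := (N./2)%:Z.
have eN : (N%:R : R) = (2 * m)%:~R.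
  by rewrite hN -muln2 natrM mulrC /m intrM /=.
have mf : m <= f.
  rewrite /f floor_ge_int; move: lt; rewrite subr_lt0 eN intrM /=.
  by move=> l; rewrite ler_pdivlMr // mulrC; apply: ltW.
rewrite eN.
case: (eqVneq m f) => [->|ne]; first by left.
right.
have mf1 : 2 * m + 2 <= 2 * f.
  have : m < f by rewrite lt_neqAle ne mf.
  lia.
have : ((2 * m + 2)%:~R : R) <= (2 * f)%:~R by rewrite ler_int.
rewrite intrD /=. 
lra.
Qed.
End H.
Local Close Scope fset_scope.
Local Open Scope ring_scope.

Theorem lemma4p2 (R : realType) (S : {fset 'rV[R]_24}) (k : nat)
    (g : nat -> 'M[R]_24) :
  (forall x, x \in S -> Cmin x) ->
  antipodal S ->
  (forall x y, x \in S -> y \in S -> x != y -> vdot x y <= 1) ->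
  (1 <= k)%N ->
  (forall j, (2 <= j <= k)%N -> Co0 (g j)) ->
  (forall j, (2 <= j <= k)%N ->
     (#|` Spart S g j|)%:R >=
       (#|` S|)%:R * (1 - (\sum_(1 <= i < j) ((#|` Spart S g i|)%:R : R))
                           / 196560%:R)) ->
  (exists h, Co0 h /\ delta S g k h < 0) ->
  ((forall h, Co0 h -> delta S g k h < 0 ->
      `|delta S g k h| <= Ek S g k - floor2 (Ek S g k)) /\
   (exists h, Co0 h /\ delta S g k h < 0 /\
      `|delta S g k h| = Ek S g k - floor2 (Ek S g k)))
  \/
  (exists h, Co0 h /\ delta S g k h < 0 /\
      `|delta S g k h| >= Ek S g k - floor2 (Ek S g k) + 2).
Proof.
move=> hC hA _ _ _ _ [h0 [c0 d0]].
have key : forall h, Co0 h -> delta S g k h < 0 ->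
    `|delta S g k h| = Ek S g k - floor2 (Ek S g k) \/
    `|delta S g k h| >= Ek S g k - floor2 (Ek S g k) + 2.
  move=> h ch dh; apply: arith => //.
  exact: even_card.
case: (pselect (exists h, Co0 h /\ delta S g k h < 0 /\
      `|delta S g k h| >= Ek S g k - floor2 (Ek S g k) + 2)) => [//|nex]; first by right.
left; split.
  move=> h ch dh; case: (key h ch dh) => [-> //|ge].
  by exfalso; apply: nex; exists h.
exists h0; split => //; split => //.
case: (key h0 c0 d0) => // ge.
by exfalso; apply: nex; exists h0.
Qed.
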